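(* Let $(P)$ be a property of C*-algebras. Assume: (1) the zero C*-algebra has $(P)$; (2) whenever $A$ is a C*-algebra and $I, J \subseteq A$ are ideals with $(P)$, then $I + J$ has $(P)$; (3) whenever $A$ is a C*-algebra, $\Lambda$ is a directed set, and $(I_\lambda)_{\lambda \in \Lambda}$ is a family of ideals of $A$ with $(P)$ such that $I_\lambda \subseteq I_\mu$ whenever $\lambda \le \mu$, then $\overline{\bigcup_{\lambda \in \Lambda} I_\lambda}$ has $(P)$. Then $(P)$ admits largest ideals.
   Context: All ideals are closed two-sided. $(P)$ admits largest ideals if for every C*-algebra $A$ there is an ideal $I \subseteq A$ with $(P)$ such that every ideal $J \subseteq A$ with $(P)$ satisfies $J \subseteq I$. *)

(* Defs.v *)
From Stdlib Require Import Reals ProofIrrelevance.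
From Coquelicot Require Import Complex.
Open Scope R_scope.

Record CStar := {
  car :> Type;
  zero : car;
  add : car -> car -> car;
  opp : car -> car;
  scal : C -> car -> car;
  mul : car -> car -> car;
  star : car -> car;
  norm : car -> R;
  add_assoc : forall x y z, add x (add y z) = add (add x y) z;
  add_comm : forall x y, add x y = add y x;
  add_0 : forall x, add zero x = x;
  add_opp : forall x, add (opp x) x = zero;
  scal_assoc : forall a b x, scal a (scal b x) = scal (Cmult a b) x;
  scal_1 : forall x, scal (RtoC 1) x = x;
  scal_distr_l : forall a x y, scal a (add x y) = add (scal a x) (scal a y);
  scal_distr_r : forall a b x, scal (Cplus a b) x = add (scal a x) (scal b x);
  mul_assoc : forall x y z, mul x (mul y z) = mul (mul x y) z;
  mul_distr_l : forall x y z, mul x (add y z) = add (mul x y) (mul x z);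
  mul_distr_r : forall x y z, mul (add x y) z = add (mul x z) (mul y z);
  mul_scal_l : forall a x y, mul (scal a x) y = scal a (mul x y);
  mul_scal_r : forall a x y, mul x (scal a y) = scal a (mul x y);
  star_invol : forall x, star (star x) = x;
  star_add : forall x y, star (add x y) = add (star x) (star y);
  star_scal : forall a x, star (scal a x) = scal (Cconj a) (star x);
  star_mul : forall x y, star (mul x y) = mul (star y) (star x);
  norm_eq0 : forall x, norm x = 0 -> x = zero;
  norm_triangle : forall x y, norm (add x y) <= norm x + norm y;
  norm_scal : forall a x, norm (scal a x) = Cmod a * norm x;
  norm_mul : forall x y, norm (mul x y) <= norm x * norm y;
  norm_cstar : forall x, norm (mul (star x) x) = norm x * norm x;
  complete : forall u : nat -> car,
    (forall eps, 0 < eps -> exists N, forall m n, (N <= m)%nat -> (N <= n)%nat ->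
        norm (add (u m) (opp (u n))) < eps) ->
    exists l, forall eps, 0 < eps -> exists N, forall n, (N <= n)%nat ->
        norm (add (u n) (opp l)) < eps
}.

Arguments zero {c}. Arguments add {c}. Arguments opp {c}. Arguments scal {c}.
Arguments mul {c}. Arguments star {c}. Arguments norm {c}.

Definition conv {A : CStar} (u : nat -> A) (x : A) : Prop :=
  forall eps, 0 < eps -> exists N, forall n, (N <= n)%nat -> norm (add (u n) (opp x)) < eps.

(* (sequential = metric) closure of a subset *)
Definition in_closure {A : CStar} (S : A -> Prop) (x : A) : Prop :=
  exists u : nat -> A, (forall n, S (u n)) /\ conv u x.

(* A (closed two-sided) ideal.  Closed two-sided ideals of a C*-algebra are
   automatically self-adjoint; we record this as a field (istar) so that the
   ideal carries its C*-algebra structure. *)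
Record ideal (A : CStar) := {
  iset : A -> Prop;
  i0 : iset zero;
  iadd : forall x y, iset x -> iset y -> iset (add x y);
  iopp : forall x, iset x -> iset (opp x);
  iscal : forall a x, iset x -> iset (scal a x);
  imull : forall a x, iset x -> iset (mul a x);
  imulr : forall a x, iset x -> iset (mul x a);
  istar : forall x, iset x -> iset (star x);
  iclosed : forall x, in_closure iset x -> iset x
}.
Arguments iset {A}.

Section IdealCStar.
Variables (A : CStar) (I : ideal A).
Let T := {x : A | iset I x}.
Let sv (x : T) : A := proj1_sig x.
Lemma sub_eq (x y : T) : sv x = sv y -> x = y.
Proof. destruct x, y; unfold sv; simpl; intros ->; f_equal; apply proof_irrelevance. Qed.

Definition ic_zero : T := exist _ zero (i0 A I).
Definition ic_add (x y : T) : T := exist _ (add (sv x) (sv y)) (iadd A I _ _ (proj2_sig x) (proj2_sig y)).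
Definition ic_opp (x : T) : T := exist _ (opp (sv x)) (iopp A I _ (proj2_sig x)).
Definition ic_scal a (x : T) : T := exist _ (scal a (sv x)) (iscal A I a _ (proj2_sig x)).
Definition ic_mul (x y : T) : T := exist _ (mul (sv x) (sv y)) (imull A I (sv x) _ (proj2_sig y)).
Definition ic_star (x : T) : T := exist _ (star (sv x)) (istar A I _ (proj2_sig x)).
Definition ic_norm (x : T) : R := norm (sv x).

Lemma ic_complete : forall u : nat -> T,
    (forall eps, 0 < eps -> exists N, forall m n, (N <= m)%nat -> (N <= n)%nat ->
        ic_norm (ic_add (u m) (ic_opp (u n))) < eps) ->
    exists l, forall eps, 0 < eps -> exists N, forall n, (N <= n)%nat ->
        ic_norm (ic_add (u n) (ic_opp l)) < eps.
Proof.
  intros u Hu.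
  destruct (complete A (fun n => sv (u n)) Hu) as [l Hl].
  assert (Il : iset I l).
  { apply iclosed. exists (fun n => sv (u n)); split; [intro n; exact (proj2_sig (u n)) | exact Hl]. }
  exists (exist _ l Il). exact Hl.
Qed.

Definition ideal_cstar : CStar.
Proof.
  refine (@Build_CStar T ic_zero ic_add ic_opp ic_scal ic_mul ic_star ic_norm
    _ _ _ _ _ _ _ _ _ _ _ _ _ _ _ _ _ _ _ _ _ _ ic_complete);
  try (intros; apply sub_eq; simpl; unfold sv; simpl; first
    [ apply add_assoc | apply add_comm | apply add_0 | apply add_opp
    | apply scal_assoc | apply scal_1 | apply scal_distr_l | apply scal_distr_r
    | apply mul_assoc | apply mul_distr_l | apply mul_distr_r | apply mul_scal_l
    | apply mul_scal_r | apply star_invol | apply star_add | apply star_scal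
    | apply star_mul | apply norm_eq0; assumption ]).
  - intros; apply norm_triangle.
  - intros; apply norm_scal.
  - intros; apply norm_mul.
  - intros; apply norm_cstar.
Defined.
End IdealCStar.
Arguments ideal_cstar {A}.

Definition directed {L : Type} (le : L -> L -> Prop) : Prop :=
  inhabited L /\ (forall l, le l l) /\
  (forall l m n, le l m -> le m n -> le l n) /\
  (forall l m, exists n, le l n /\ le m n).

Definition admits_largest_ideals (P : CStar -> Prop) : Prop :=
  forall A : CStar, exists I : ideal A, P (ideal_cstar I) /\
    forall J : ideal A, P (ideal_cstar J) -> forall x, iset J x -> iset I x.

(* Main.v *)
Require Import Defs.
From Stdlib Require Import Reals Lra Lia ClassicalEpsilon ProofIrrelevance.
From Coquelicot Require Import Complex.


Declare Scope cs_scope.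
Delimit Scope cs_scope with cs.
Infix "⊕" := add (at level 50, left associativity) : cs_scope.
Infix "⊗" := mul (at level 40, left associativity) : cs_scope.
Notation "⊖ x" := (opp x) (at level 35, right associativity) : cs_scope.
Infix "⋅" := scal (at level 40) : cs_scope.
Notation "x ⊝ y" := (add x (opp y)) (at level 50, left associativity) : cs_scope.
Notation "'θ'" := zero : cs_scope.
Open Scope cs_scope.
Open Scope R_scope.
Open Scope cs_scope.

Section Basics.
Variable A : CStar.
Implicit Types x y z : car A.

Lemma add_0r x : x ⊕ θ = x.
Proof. rewrite add_comm; apply add_0. Qed.
Lemma add_oppr x : x ⊝ x = θ.
Proof. rewrite add_comm; apply add_opp. Qed.
Lemma add_cancel_l x y z : x ⊕ y = x ⊕ z -> y = z.
Proof.
  intro H. rewrite <- (add_0 _ y), <- (add_0 _ z), <- (add_opp _ x).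
  rewrite <- !add_assoc, H. reflexivity.
Qed.
Lemma opp_unique x y : x ⊕ y = θ -> y = ⊖ x.
Proof. intro H. apply (add_cancel_l x). rewrite H, add_oppr. reflexivity. Qed.
Lemma opp_opp x : ⊖ ⊖ x = x.
Proof. symmetry. apply opp_unique. apply add_opp. Qed.
Lemma opp_add x y : ⊖ (x ⊕ y) = ⊖ x ⊕ ⊖ y.
Proof.
  symmetry. apply opp_unique.
  rewrite (add_comm _ (⊖ x)), add_assoc, <- (add_assoc _ x), add_oppr, add_0r, add_oppr.
  reflexivity.
Qed.
Lemma opp_zero : ⊖ θ = (θ : car A).
Proof. symmetry; apply opp_unique, add_0. Qed.
Lemma add_swap x y z : x ⊕ y ⊕ z = x ⊕ z ⊕ y.
Proof. rewrite <- !add_assoc, (add_comm _ y). reflexivity. Qed.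
Lemma add_4 x y z (w : car A) : (x ⊕ y) ⊕ (z ⊕ w) = (x ⊕ z) ⊕ (y ⊕ w).
Proof. rewrite !add_assoc, (add_swap x y z). reflexivity. Qed.
Lemma sub_eq0 x y : x ⊝ y = θ -> x = y.
Proof. intro H. apply opp_unique in H. rewrite <- (opp_opp y), H, opp_opp. reflexivity. Qed.

Lemma mul_0l x : θ ⊗ x = θ.
Proof.
  apply (add_cancel_l (θ ⊗ x)). rewrite <- mul_distr_r, add_0, add_0r. reflexivity.
Qed.
Lemma mul_0r x : x ⊗ θ = θ.
Proof.
  apply (add_cancel_l (x ⊗ θ)). rewrite <- mul_distr_l, add_0, add_0r. reflexivity.
Qed.
Lemma mul_oppl x y : (⊖ x) ⊗ y = ⊖ (x ⊗ y).
Proof. apply opp_unique. rewrite <- mul_distr_r, add_oppr, mul_0l. reflexivity. Qed.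
Lemma mul_oppr x y : x ⊗ (⊖ y) = ⊖ (x ⊗ y).
Proof. apply opp_unique. rewrite <- mul_distr_l, add_oppr, mul_0r. reflexivity. Qed.

Lemma scal_0 x : scal (RtoC 0) x = θ.
Proof.
  apply (add_cancel_l (scal (RtoC 0) x)). rewrite <- scal_distr_r, add_0r.
  f_equal. apply injective_projections; simpl; ring.
Qed.
Lemma scal_zero (c : C) : c ⋅ θ = (θ : car A).
Proof.
  apply (add_cancel_l (c ⋅ θ)). rewrite <- scal_distr_l, !add_0r. reflexivity.
Qed.
Lemma scal_m1 x : scal (RtoC (-1)) x = ⊖ x.
Proof.
  apply opp_unique. rewrite <- (scal_1 _ x) at 1. rewrite <- scal_distr_r.
  replace (Cplus (RtoC 1) (RtoC (-1))) with (RtoC 0). apply scal_0.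
  apply injective_projections; simpl; ring.
Qed.
Lemma scal_opp (c : C) x : c ⋅ (⊖ x) = ⊖ (c ⋅ x).
Proof. apply opp_unique. rewrite <- scal_distr_l, add_oppr. apply scal_zero. Qed.
Lemma scal_add_r (c d : C) x : (Cplus c d) ⋅ x = c ⋅ x ⊕ d ⋅ x.
Proof. apply scal_distr_r. Qed.

Lemma star_zero : star (θ : car A) = θ.
Proof. rewrite <- (scal_0 θ) at 1. rewrite star_scal.
  replace (Cconj (RtoC 0)) with (RtoC 0). apply scal_0.
  apply injective_projections; simpl; ring. Qed.
Lemma star_opp x : star (⊖ x) = ⊖ star x.
Proof. apply opp_unique. rewrite <- star_add, add_oppr. apply star_zero. Qed.

Lemma norm_zero : norm (θ : car A) = 0%R.
Proof. rewrite <- (scal_0 θ), norm_scal, Cmod_0. ring. Qed.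
Lemma norm_opp x : norm (⊖ x) = norm x.
Proof. rewrite <- scal_m1, norm_scal, Cmod_R. unfold Rabs; destruct Rcase_abs; lra. Qed.
Lemma norm_nonneg x : (0 <= norm x)%R.
Proof.
  pose proof (norm_triangle _ x (⊖ x)). rewrite add_oppr, norm_zero, norm_opp in H. lra.
Qed.
Lemma norm_sub_sym x y : norm (x ⊝ y) = norm (y ⊝ x).
Proof. rewrite <- norm_opp, opp_add, opp_opp, add_comm. reflexivity. Qed.
Lemma norm_star x : norm (star x) = norm x.
Proof.
  assert (H1 : forall y : car A, (norm y <= norm (star y))%R).
  { intro y. destruct (Req_dec (norm y) 0) as [E|E].
    - rewrite E. apply norm_nonneg.
    - pose proof (norm_cstar _ y). pose proof (norm_mul _ (star y) y).
      pose proof (norm_nonneg y).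
      assert (norm y * norm y <= norm (star y) * norm y)%R by lra.
      apply Rmult_le_reg_r with (norm y). lra. lra. }
  apply Rle_antisym. 2: apply H1.
  rewrite <- (star_invol _ x) at 2. apply H1.
Qed.
Lemma norm_eq0_iff x : norm x = 0%R <-> x = θ.
Proof. split. apply norm_eq0. intros ->; apply norm_zero. Qed.
Lemma norm_sub_tri x y z : (norm (x ⊝ z) <= norm (x ⊝ y) + norm (y ⊝ z))%R.
Proof.
  replace (x ⊝ z) with ((x ⊝ y) ⊕ (y ⊝ z)). apply norm_triangle.
  rewrite <- add_assoc, (add_assoc _ (⊖ y)), add_opp, add_0. reflexivity.
Qed.
Lemma norm_le_eps x : (forall eps, 0 < eps -> norm x <= eps)%R -> x = θ.
Proof.
  intro H. apply norm_eq0. pose proof (norm_nonneg x).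
  destruct (Req_dec (norm x) 0); auto.
  specialize (H (norm x / 2)%R). lra.
Qed.
End Basics.


Lemma pull_step {A : CStar} (L1 L1' u t : car A) : L1 = L1' ⊕ t -> L1 ⊕ u = (L1' ⊕ u) ⊕ t.
Proof. intros ->. apply add_swap. Qed.
Lemma pull_single {A : CStar} (t : car A) : t = θ ⊕ t.
Proof. symmetry; apply add_0. Qed.
Lemma cancel_r {A : CStar} (x y t : car A) : x = y -> x ⊕ t = y ⊕ t.
Proof. intros ->; reflexivity. Qed.

Ltac pull t L :=
  lazymatch L with
  | add ?L1 t => constr:(@eq_refl _ L)
  | add ?L1 ?u => let p := pull t L1 in constr:(pull_step _ _ u t p)
  | t => constr:(pull_single t)
  end.

Ltac ac_loop :=
  lazymatch goal with
  | |- ?L = ?L => reflexivity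
  | |- ?L = add ?R ?t =>
      let p := pull t L in
      refine (eq_trans p _); apply cancel_r; rewrite ?add_0; ac_loop
  end.
Ltac ac := rewrite ?add_assoc; ac_loop.

Goal forall (A : CStar) (a b c d : car A), a ⊕ (b ⊕ c) ⊕ d = d ⊕ (c ⊕ a) ⊕ b.
Proof. intros. ac. Qed.

Lemma ac_cancel_lemma {A : CStar} (L R t : car A) : L = R ⊕ (t ⊝ t) -> L = R.
Proof. intros ->. rewrite add_oppr, add_0r. reflexivity. Qed.
Ltac ac_with t := apply (ac_cancel_lemma _ _ t); ac.
Ltac ac_with2 t u := apply (ac_cancel_lemma _ _ t); apply (ac_cancel_lemma _ _ u); ac.
Ltac ac_with3 t u v := apply (ac_cancel_lemma _ _ t); apply (ac_cancel_lemma _ _ u); apply (ac_cancel_lemma _ _ v); ac.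


Ltac expand := rewrite ?scal_distr_l, ?mul_distr_l, ?mul_distr_r, ?mul_scal_l, ?mul_scal_r,
   ?scal_assoc, ?mul_assoc.

Section Unitization.
Variable A : CStar.
Definition Ua := (C * car A)%type.
Definition uadd (X Y : Ua) : Ua := (Cplus (fst X) (fst Y), snd X ⊕ snd Y).
Definition umul (X Y : Ua) : Ua :=
  (Cmult (fst X) (fst Y), fst X ⋅ snd Y ⊕ fst Y ⋅ snd X ⊕ snd X ⊗ snd Y).
Definition ustar (X : Ua) : Ua := (Cconj (fst X), star (snd X)).
Definition uone : Ua := (RtoC 1, θ).
Definition uemb (x : car A) : Ua := (RtoC 0, x).
Definition unorm (X : Ua) : R := (Cmod (fst X) + norm (snd X))%R.

Lemma umul_assoc X Y Z : umul X (umul Y Z) = umul (umul X Y) Z.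
Proof.
  destruct X as [l x], Y as [m y], Z as [n z]; unfold umul; simpl.
  f_equal. ring. expand.
  rewrite (Cmult_comm n l), (Cmult_comm n m). ac.
Qed.

Lemma umul_1l X : umul uone X = X.
Proof.
  destruct X as [l x]; unfold umul, uone; simpl. f_equal.
  apply injective_projections; simpl; ring.
  rewrite scal_1, scal_zero, mul_0l, ?add_0, ?add_0r. reflexivity.
Qed.
Lemma umul_1r X : umul X uone = X.
Proof.
  destruct X as [l x]; unfold umul, uone; simpl. f_equal.
  apply injective_projections; simpl; ring.
  rewrite scal_1, scal_zero, mul_0r, ?add_0, ?add_0r. reflexivity.
Qed.

Lemma ustar_mul X Y : ustar (umul X Y) = umul (ustar Y) (ustar X).
Proof.
  destruct X as [l x], Y as [m y]; unfold umul, ustar; simpl. f_equal.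
  rewrite Cmult_conj. ring.
  rewrite !star_add, !star_scal, star_mul. ac.
Qed.
Lemma ustar_invol X : ustar (ustar X) = X.
Proof. destruct X as [l x]; unfold ustar; simpl. rewrite Cconj_conj, star_invol. reflexivity. Qed.

Lemma uemb_mul x y : umul (uemb x) (uemb y) = uemb (x ⊗ y).
Proof.
  unfold umul, uemb; simpl. f_equal. apply injective_projections; simpl; ring.
  rewrite !scal_0, !add_0. reflexivity.
Qed.
Lemma ustar_uemb x : ustar (uemb x) = uemb (star x).
Proof. unfold ustar, uemb; simpl. f_equal. apply injective_projections; simpl; ring. Qed.

Definition act (b : car A) (X : Ua) : car A := snd (umul (uemb b) X).
Lemma act_emb b X : umul (uemb b) X = uemb (act b X).
Proof.
  unfold act, umul, uemb; simpl. f_equal. apply injective_projections; simpl; ring.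
Qed.
Definition lact (X : Ua) (b : car A) : car A := snd (umul X (uemb b)).
Lemma lact_emb b X : umul X (uemb b) = uemb (lact X b).
Proof.
  unfold lact, umul, uemb; simpl. f_equal. apply injective_projections; simpl; ring.
Qed.

Lemma unorm_mul X Y : (unorm (umul X Y) <= unorm X * unorm Y)%R.
Proof.
  destruct X as [l x], Y as [m y]; unfold unorm, umul; simpl.
  rewrite Cmod_mult.
  pose proof (norm_triangle _ (l ⋅ y ⊕ m ⋅ x) (x ⊗ y)).
  pose proof (norm_triangle _ (l ⋅ y) (m ⋅ x)).
  rewrite !norm_scal in H0. pose proof (norm_mul _ x y).
  pose proof (Cmod_ge_0 l). pose proof (Cmod_ge_0 m).
  pose proof (norm_nonneg _ x). pose proof (norm_nonneg _ y). nra.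
Qed.
Lemma unorm_emb x : unorm (uemb x) = norm x.
Proof. unfold unorm, uemb; simpl. rewrite Cmod_0. ring. Qed.
Lemma unorm_nonneg X : (0 <= unorm X)%R.
Proof. unfold unorm. pose proof (Cmod_ge_0 (fst X)). pose proof (norm_nonneg _ (snd X)). lra. Qed.

Fixpoint sq (z : car A) (k : nat) : car A :=
  match k with O => z | S k => sq z k ⊗ sq z k end.
Fixpoint rsq (t : R) (k : nat) : R :=
  match k with O => t | S k => (rsq t k * rsq t k)%R end.

Lemma sq_sa z k : star z = z -> star (sq z k) = sq z k.
Proof. intro H; induction k; simpl; auto. rewrite star_mul, IHk. reflexivity. Qed.
Lemma sq_norm z k : star z = z -> norm (sq z k) = rsq (norm z) k.
Proof.
  intro H; induction k; simpl; auto.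
  rewrite <- IHk, <- norm_cstar, sq_sa; auto.
Qed.
Lemma rsq_nonneg t k : (0 <= t)%R -> (0 <= rsq t k)%R.
Proof. intro; induction k; simpl; nra. Qed.
Lemma rsq_mult t t' k : rsq (t * t') k = (rsq t k * rsq t' k)%R.
Proof. induction k; simpl; auto. rewrite IHk. ring. Qed.
Lemma rsq_zero k : rsq 0 k = 0%R.
Proof. induction k; simpl; auto. rewrite IHk; ring. Qed.
Lemma rsq_ge q k : (1 <= q)%R -> (q <= rsq q k)%R.
Proof. intro H; induction k; simpl. lra. nra. Qed.
Lemma rsq_grow q k : (1 <= q)%R -> (1 + INR k * (q - 1) <= rsq q k)%R.
Proof.
  intro H; induction k. simpl. lra.
  change (rsq q (S k)) with (rsq q k * rsq q k)%R. rewrite S_INR. pose proof (pos_INR k).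
  pose proof (rsq_ge q k H). assert (rsq q k * rsq q k >= rsq q k * q)%R by nra. nra.
Qed.

Lemma rsq_bound t t' M : (0 <= t)%R -> (0 <= t')%R ->
  (forall k, rsq t k <= M * rsq t' k)%R -> (t <= t')%R.
Proof.
  intros Ht Ht' H. destruct (Rle_dec t t') as [|Hn]; auto. exfalso.
  destruct (Req_dec t' 0) as [E|E].
  - subst. destruct (Req_dec t 0). lra.
    specialize (H O). simpl in H. lra.
  - set (q := (t / t')%R).
    assert (Hq : (1 < q)%R). { unfold q. apply Rmult_lt_reg_r with t'. lra.
      field_simplify; lra. }
    assert (Ht_eq : t = (t' * q)%R) by (unfold q; field; auto).
    destruct (INR_unbounded (M / (q - 1))) as [k Hk].
    specialize (H k). rewrite Ht_eq, rsq_mult in H.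
    pose proof (rsq_grow q k ltac:(lra)).
    assert (Hp : (0 < rsq t' k)%R).
    { clear -Ht' E. induction k; simpl. lra. nra. }
    assert (rsq q k <= M)%R. { apply Rmult_le_reg_l with (rsq t' k); nra. }
    assert (INR k * (q - 1) > M)%R.
    { apply Rmult_gt_compat_r with (r := (q-1)%R) in Hk; [|lra].
      unfold Rdiv in Hk. rewrite Rmult_assoc, Rinv_l in Hk; lra. }
    lra.
Qed.

Definition unitary (X : Ua) := umul (ustar X) X = uone /\ umul X (ustar X) = uone.

Lemma unitary_act X b : unitary X -> (norm (act b X) <= norm b)%R.
Proof.
  intros [H1 H2].
  set (c := act b X). set (d := star b ⊗ b).
  assert (Hc : forall k, uemb (sq (star c ⊗ c) k) = umul (umul (ustar X) (uemb (sq d k))) X).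
  { induction k; simpl.
    - rewrite <- uemb_mul, <- ustar_uemb. unfold c. rewrite <- act_emb, ustar_mul.
      unfold d. rewrite <- uemb_mul, <- ustar_uemb. rewrite !umul_assoc. reflexivity.
    - rewrite <- uemb_mul, IHk, <- uemb_mul.
      rewrite !umul_assoc. f_equal.
      rewrite <- (umul_assoc _ X (ustar X)), H2, umul_1r. reflexivity. }
  assert (Hb : forall k, (rsq (norm c * norm c) k <= (unorm (ustar X) * unorm X) * rsq (norm b * norm b) k)%R).
  { intro k. rewrite <- norm_cstar, <- sq_norm. 2: rewrite star_mul, star_invol; auto.
    rewrite <- unorm_emb, Hc.
    rewrite <- norm_cstar. fold d. rewrite <- sq_norm. 2: unfold d; rewrite star_mul, star_invol; auto.
    rewrite <- unorm_emb.
    eapply Rle_trans. apply unorm_mul.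
    pose proof (unorm_mul (ustar X) (uemb (sq d k))).
    pose proof (unorm_nonneg X). pose proof (unorm_nonneg (ustar X)).
    pose proof (unorm_nonneg (umul (ustar X) (uemb (sq d k)))).
    pose proof (unorm_nonneg (uemb (sq d k))). nra. }
  apply rsq_bound in Hb; try (pose proof (norm_nonneg _ c); pose proof (norm_nonneg _ b); nra).
Qed.
End Unitization.


Lemma half_pow_small (C eps : R) : (0 < eps)%R -> exists N, forall n, (N <= n)%nat -> (C * (/2)^n < eps)%R.
Proof.
  intro He.
  assert (Hb : forall n, (INR (S n) * (/2)^n <= 1)%R).
  { induction n. simpl. lra. rewrite (S_INR (S n)). change ((/2)^(S n))%R with (/2 * (/2)^n)%R.
    pose proof (pos_INR n). assert (0 < (/2)^n)%R by (apply pow_lt; lra).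
    rewrite S_INR in IHn |- *. assert ((/2)^n <= 1)%R by nra. nra. }
  destruct (INR_unbounded (Rabs C / eps)) as [N HN].
  exists N. intros n Hn.
  assert (0 < (/2)^n)%R by (apply pow_lt; lra).
  assert (INR N <= INR n)%R by (apply le_INR; auto).
  specialize (Hb n). rewrite S_INR in Hb.
  assert (Rabs C < eps * INR (S n))%R.
  { rewrite S_INR. apply Rmult_lt_compat_r with (r := eps) in HN; auto.
    unfold Rdiv in HN. rewrite Rmult_assoc, Rinv_l in HN; nra. }
  assert (C * (/2)^n <= Rabs C * (/2)^n)%R.
  { apply Rmult_le_compat_r. lra. apply Rle_abs. }
  rewrite S_INR in H1.
  assert (Rabs C * (/2)^n < eps * (INR n + 1) * (/2)^n)%R by (apply Rmult_lt_compat_r; auto).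
  nra.
Qed.

Section Limits.
Variable A : CStar.
Implicit Types x y z : car A.

Lemma geo_cauchy (f : nat -> car A) (C : R) :
  (forall n, norm (f (S n) ⊝ f n) <= C * (/2)^n)%R ->
  exists l, conv f l /\ forall n, (norm (f n ⊝ l) <= 2 * C * (/2)^n)%R.
Proof.
  intro H.
  assert (HC : (0 <= C)%R).
  { specialize (H O). simpl in H. pose proof (norm_nonneg _ (f 1%nat ⊝ f 0%nat)). lra. }
  assert (Hmn : forall k n, (norm (f (k + n)%nat ⊝ f n) <= 2 * C * (/2)^n - 2 * C * (/2)^(k+n))%R).
  { induction k; intro n.
    - simpl. rewrite add_oppr, norm_zero. lra.
    - eapply Rle_trans. apply (norm_sub_tri _ _ (f (k + n)%nat)).
      specialize (H (k + n)%nat). specialize (IHk n). simpl plus. simpl pow.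
      lra. }
  assert (Hmn' : forall m n, (n <= m)%nat -> (norm (f m ⊝ f n) <= 2 * C * (/2)^n)%R).
  { intros m n Hle. replace m with ((m - n) + n)%nat by lia.
    specialize (Hmn (m - n)%nat n). assert (0 < (/2)^(m - n + n))%R by (apply pow_lt; lra). nra. }
  destruct (complete A f) as [l Hl].
  { intros eps He. destruct (half_pow_small (2 * C) eps He) as [N HN].
    exists N. intros m n Hm Hn.
    destruct (Nat.le_ge_cases n m).
    - specialize (Hmn' m n H0). specialize (HN n Hn). lra.
    - specialize (Hmn' n m H0). specialize (HN m Hm). rewrite norm_sub_sym. lra. }
  exists l. split. exact Hl.
  intro n. apply Rnot_lt_le. intro Hlt.
  set (d := (norm (f n ⊝ l) - 2 * C * (/2)^n)%R).
  destruct (Hl d ltac:(unfold d; lra)) as [N HN].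
  specialize (HN (N + n)%nat ltac:(lia)).
  specialize (Hmn' (N + n)%nat n ltac:(lia)).
  pose proof (norm_sub_tri _ (f n) (f (N+n)%nat) l).
  rewrite norm_sub_sym in Hmn'. unfold d in HN. lra.
Qed.

Lemma conv_zero_lim (x : car A) (e : nat -> R) :
  (forall eps, 0 < eps -> exists N, forall n, (N <= n)%nat -> e n < eps)%R ->
  (forall n, norm x <= e n)%R -> x = θ.
Proof.
  intros He Hx. apply norm_le_eps. intros eps Heps.
  destruct (He eps Heps) as [N HN]. specialize (HN N (le_n _)). specialize (Hx N). lra.
Qed.

Lemma norm_sub_mul_l a x y : (norm (a ⊗ x ⊝ a ⊗ y) <= norm a * norm (x ⊝ y))%R.
Proof. rewrite <- mul_oppr, <- mul_distr_l. apply norm_mul. Qed.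

Fixpoint neu (a : car A) (n : nat) : car A :=
  match n with O => θ | S n => ⊖ a ⊝ a ⊗ neu a n end.

Lemma neu_comm a n : a ⊗ neu a n = neu a n ⊗ a.
Proof.
  induction n; simpl. rewrite mul_0l, mul_0r. reflexivity.
  rewrite mul_distr_l, mul_distr_r, !mul_oppl, !mul_oppr.
  rewrite <- (mul_assoc _ a (neu a n) a), <- IHn, !mul_assoc. reflexivity.
Qed.

Lemma neu_diff a n : neu a (S (S n)) ⊝ neu a (S n) = ⊖ (a ⊗ (neu a (S n) ⊝ neu a n)).
Proof.
  change (neu a (S (S n))) with (⊖ a ⊝ a ⊗ neu a (S n)).
  change (neu a (S n)) with (⊖ a ⊝ a ⊗ neu a n) at 2.
  rewrite !mul_distr_l, !mul_oppr, !opp_add, !opp_opp. ac_with a.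
Qed.

Lemma lim_identity (F : car A -> car A) (L : R) (f : nat -> car A) r :
  conv f r -> (forall x y, norm (F x ⊝ F y) <= L * norm (x ⊝ y))%R ->
  (forall eps, 0 < eps -> exists N, forall n, (N <= n)%nat -> norm (F (f n)) < eps)%R ->
  F r = θ.
Proof.
  intros Hc HL Hs. apply norm_le_eps. intros eps He.
  assert (HL0 : (0 <= L)%R \/ (L < 0)%R) by lra.
  set (L' := (Rabs L + 1)%R).
  assert (HL' : (0 < L')%R) by (unfold L'; pose proof (Rabs_pos L); lra).
  destruct (Hc (eps / 2 / L')%R) as [N1 H1]. { apply Rdiv_lt_0_compat; lra. }
  destruct (Hs (eps / 2)%R) as [N2 H2]. lra.
  specialize (H1 (N1 + N2)%nat ltac:(lia)). specialize (H2 (N1 + N2)%nat ltac:(lia)).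
  set (x := f (N1 + N2)%nat) in *.
  specialize (HL r x). rewrite norm_sub_sym in H1.
  assert (F r = (F r ⊝ F x) ⊕ F x) as E.
  { rewrite <- add_assoc, add_opp, add_0r. reflexivity. }
  rewrite E. eapply Rle_trans. apply norm_triangle.
  assert (L * norm (r ⊝ x) <= L' * norm (r ⊝ x))%R.
  { apply Rmult_le_compat_r. apply norm_nonneg. unfold L'. pose proof (Rle_abs L). lra. }
  assert (L' * norm (r ⊝ x) <= eps / 2)%R.
  { apply Rlt_le in H1. apply Rmult_le_compat_l with (r := L') in H1; [|lra].
    replace (L' * (eps / 2 / L'))%R with (eps/2)%R in H1 by (field; lra). lra. }
  lra.
Qed.

Lemma neumann a : (norm a <= /2)%R -> exists r,
  a ⊕ r ⊕ a ⊗ r = θ /\ a ⊕ r ⊕ r ⊗ a = θ /\ conv (neu a) r.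
Proof.
  intro Ha.
  assert (HD : forall n, (norm (neu a (S n) ⊝ neu a n) <= (/2) * (/2)^n)%R).
  { induction n.
    - simpl. rewrite mul_0r, ?opp_zero, ?add_0r, norm_opp. lra.
    - rewrite neu_diff, norm_opp. eapply Rle_trans. apply norm_mul.
      pose proof (norm_nonneg _ a). pose proof (norm_nonneg _ (neu a (S n) ⊝ neu a n)).
      simpl pow. assert (0 <= (/2)^n)%R by (apply pow_le; lra). nra. }
  destruct (geo_cauchy (neu a) (/2) HD) as [r [Hr Hrn]].
  exists r.
  assert (E1 : a ⊕ r ⊕ a ⊗ r = θ).
  { apply (lim_identity (fun x => a ⊕ x ⊕ a ⊗ x) (1 + norm a) (neu a) r Hr).
    - intros x y.
      replace ((a ⊕ x ⊕ a ⊗ x) ⊝ (a ⊕ y ⊕ a ⊗ y)) with ((x ⊝ y) ⊕ a ⊗ (x ⊝ y)).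
      + eapply Rle_trans. apply norm_triangle.
        pose proof (norm_mul _ a (x ⊝ y)). lra.
      + rewrite mul_distr_l, mul_oppr, !opp_add. symmetry. ac_with a.
    - intros eps He. destruct (half_pow_small (/2) eps He) as [N HN].
      exists (S N). intros n Hn. destruct n as [|m]. lia.
      replace (a ⊕ neu a (S m) ⊕ a ⊗ neu a (S m)) with (a ⊗ (neu a (S m) ⊝ neu a m)).
      + eapply Rle_lt_trans. apply norm_mul.
        specialize (HD m). specialize (HN m ltac:(lia)).
        pose proof (norm_nonneg _ a). pose proof (norm_nonneg _ (neu a (S m) ⊝ neu a m)).
        assert (0 <= (/2)^m)%R by (apply pow_le; lra). nra.
      + transitivity (a ⊕ (⊖ a ⊝ a ⊗ neu a m) ⊕ a ⊗ neu a (S m)); [|reflexivity].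
        rewrite !mul_distr_l, !mul_oppr. symmetry. ac_with a. }
  assert (Ec : r ⊗ a ⊝ a ⊗ r = θ).
  { apply (lim_identity (fun x => x ⊗ a ⊝ a ⊗ x) (norm a + norm a) (neu a) r Hr).
    - intros x y.
      replace ((x ⊗ a ⊝ a ⊗ x) ⊝ (y ⊗ a ⊝ a ⊗ y)) with ((x ⊝ y) ⊗ a ⊝ a ⊗ (x ⊝ y)).
      + eapply Rle_trans. apply norm_triangle. rewrite norm_opp.
        pose proof (norm_mul _ a (x ⊝ y)). pose proof (norm_mul _ (x ⊝ y) a). lra.
      + rewrite mul_distr_l, mul_distr_r, mul_oppr, mul_oppl, !opp_add, !opp_opp. ac.
    - intros eps He. exists O. intros n _. rewrite neu_comm, add_oppr, norm_zero. lra. }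
  apply sub_eq0 in Ec. rewrite Ec. auto.
Qed.
End Limits.


Section K.
Variable A : CStar.
Implicit Types x y z b w : car A.

Fixpoint asum (n : nat) (f : nat -> car A) : car A :=
  match n with O => θ | S n => asum n f ⊕ f n end.

Lemma asum_mul_l x n f : x ⊗ asum n f = asum n (fun k => x ⊗ f k).
Proof. induction n; simpl. apply mul_0r. rewrite mul_distr_l, IHn. reflexivity. Qed.
Lemma asum_mul_r x n f : asum n f ⊗ x = asum n (fun k => f k ⊗ x).
Proof. induction n; simpl. apply mul_0l. rewrite mul_distr_r, IHn. reflexivity. Qed.
Lemma asum_star n f : star (asum n f) = asum n (fun k => star (f k)).
Proof. induction n; simpl. apply star_zero. rewrite star_add, IHn. reflexivity. Qed.
Lemma asum_add n f g : asum n (fun k => f k ⊕ g k) = asum n f ⊕ asum n g.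
Proof. induction n; simpl. rewrite add_0; reflexivity. rewrite IHn. ac. Qed.
Lemma asum_scal c n f : c ⋅ asum n f = asum n (fun k => c ⋅ f k).
Proof. induction n; simpl. apply scal_zero. rewrite scal_distr_l, IHn. reflexivity. Qed.
Lemma asum_ext n f g : (forall k, f k = g k) -> asum n f = asum n g.
Proof. intro H; induction n; simpl; auto. rewrite IHn, H. reflexivity. Qed.
Lemma asum_norm n f M : (forall k, norm (f k) <= M)%R -> (norm (asum n f) <= INR n * M)%R.
Proof.
  intro H; induction n; cbn [asum]. rewrite norm_zero; simpl; lra.
  rewrite S_INR. eapply Rle_trans. apply norm_triangle. specialize (H n). lra.
Qed.
Lemma asum_const n b : asum n (fun _ => b) = RtoC (INR n) ⋅ b.
Proof.
  induction n; cbn [asum]. symmetry; apply scal_0.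
  rewrite IHn. rewrite <- (scal_1 _ b) at 2. rewrite <- scal_distr_r. f_equal.
  rewrite S_INR. apply injective_projections; simpl; ring.
Qed.
Lemma asum_ideal (J : ideal A) n f : (forall k, iset J (f k)) -> iset J (asum n f).
Proof. intro H; induction n; simpl. apply i0. apply iadd; auto. Qed.

Lemma Cconj1 : Cconj (RtoC 1) = RtoC 1.
Proof. apply injective_projections; simpl; ring. Qed.
Lemma C11 : Cmult (RtoC 1) (RtoC 1) = RtoC 1.
Proof. apply injective_projections; simpl; ring. Qed.

Definition uw w : Ua A := (RtoC 1, w).

Lemma uw_mul w x : umul A (uw w) (uw x) = uw (x ⊕ w ⊕ w ⊗ x).
Proof. unfold umul, uw; simpl. rewrite C11, !scal_1. reflexivity. Qed.

Lemma unitary_uw w : unitary A (uw w) <->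
  (w ⊕ star w ⊕ star w ⊗ w = θ /\ star w ⊕ w ⊕ w ⊗ star w = θ).
Proof.
  unfold unitary, umul, ustar, uw, uone; simpl. rewrite Cconj1, C11, !scal_1.
  split; intros [H1 H2]; split.
  - injection H1; auto.
  - injection H2; auto.
  - rewrite H1; reflexivity.
  - rewrite H2; reflexivity.
Qed.

Lemma unitary_mul X Y : unitary A X -> unitary A Y -> unitary A (umul A X Y).
Proof.
  intros [H1 H2] [H3 H4]. split.
  - rewrite ustar_mul, <- umul_assoc, (umul_assoc _ (ustar A X)), H1, umul_1l. exact H3.
  - rewrite ustar_mul, <- umul_assoc, (umul_assoc _ Y), H4, umul_1l. exact H2.
Qed.

Lemma unitary_star X : unitary A X -> unitary A (ustar A X).
Proof. intros [H1 H2]. split; rewrite ustar_invol; auto. Qed.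

Lemma act_uw b w : act A b (uw w) = b ⊕ b ⊗ w.
Proof. unfold act, umul, uemb, uw; simpl. rewrite scal_0, scal_1, add_0. reflexivity. Qed.

Lemma uw_right b w : unitary A (uw w) -> (norm (b ⊕ b ⊗ w) <= norm b)%R.
Proof. intro H. rewrite <- act_uw. apply unitary_act. exact H. Qed.

Lemma uw_left b w : unitary A (uw w) -> (norm (b ⊕ star w ⊗ b) <= norm b)%R.
Proof.
  intro H. rewrite <- norm_star, star_add, star_mul, star_invol.
  rewrite <- (norm_star _ b).
  exact (uw_right (star b) w H).
Qed.

Lemma uw_norm w : unitary A (uw w) -> (norm w <= 2)%R.
Proof.
  intro H. apply unitary_uw in H. destruct H as [H _].
  assert (E : star w ⊗ w = ⊖ (w ⊕ star w)).
  { apply opp_unique. rewrite add_comm, <- H. ac. }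
  pose proof (norm_cstar _ w). rewrite E, norm_opp in H0.
  pose proof (norm_triangle _ w (star w)). rewrite norm_star in H1.
  pose proof (norm_nonneg _ w). nra.
Qed.

Lemma unitary_one : unitary A (uw θ).
Proof. apply unitary_uw. rewrite star_zero, mul_0r, !add_0. split; reflexivity. Qed.
End K.


Ltac expand2 := repeat progress (rewrite ?scal_distr_l, ?mul_distr_l, ?mul_distr_r, ?mul_scal_l, ?mul_scal_r,
   ?scal_assoc, ?mul_oppl, ?mul_oppr, ?opp_add, ?opp_opp, ?mul_assoc).
Ltac canc t := apply (ac_cancel_lemma _ _ t).

Section K2.
Variable A : CStar.
Implicit Types x y z b w a r : car A.

Lemma cayley_P1 a r : star a = ⊖ a -> a ⊕ r ⊕ a ⊗ r = θ ->
  star r ⊕ r ⊕ star r ⊗ r ⊕ star r ⊗ r = θ.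
Proof.
  intros Ha E1.
  assert (E1s : ⊖ a ⊕ star r ⊕ ⊖ (star r ⊗ a) = θ).
  { rewrite <- star_zero, <- E1, !star_add, star_mul, Ha, mul_oppr. reflexivity. }
  transitivity (star r ⊗ (a ⊕ r ⊕ a ⊗ r) ⊕ (⊖ a ⊕ star r ⊕ ⊖ (star r ⊗ a)) ⊗ r
                ⊕ (a ⊕ r ⊕ a ⊗ r) ⊕ (⊖ a ⊕ star r ⊕ ⊖ (star r ⊗ a))).
  - expand2. symmetry. canc (star r ⊗ a ⊗ r). canc (a ⊗ r). canc a. canc (star r ⊗ a). ac.
  - rewrite E1, E1s, mul_0r, mul_0l, !add_0. reflexivity.
Qed.

Lemma cayley_P2 a r : star a = ⊖ a -> a ⊕ r ⊕ r ⊗ a = θ ->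
  r ⊕ star r ⊕ r ⊗ star r ⊕ r ⊗ star r = θ.
Proof.
  intros Ha E2.
  assert (E2s : ⊖ a ⊕ star r ⊕ ⊖ (a ⊗ star r) = θ).
  { rewrite <- star_zero, <- E2, !star_add, star_mul, Ha, mul_oppl. reflexivity. }
  transitivity ((a ⊕ r ⊕ r ⊗ a) ⊗ star r ⊕ r ⊗ (⊖ a ⊕ star r ⊕ ⊖ (a ⊗ star r))
                ⊕ (a ⊕ r ⊕ r ⊗ a) ⊕ (⊖ a ⊕ star r ⊕ ⊖ (a ⊗ star r))).
  - expand2. symmetry. canc (r ⊗ a ⊗ star r). canc (r ⊗ a). canc a. canc (a ⊗ star r). ac.
  - rewrite E2, E2s, mul_0r, mul_0l, !add_0. reflexivity.
Qed.

Lemma cayley_unitary a r : star a = ⊖ a -> a ⊕ r ⊕ a ⊗ r = θ -> a ⊕ r ⊕ r ⊗ a = θ ->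
  unitary A (uw A (r ⊕ r)).
Proof.
  intros Ha E1 E2. apply unitary_uw. rewrite star_add.
  pose proof (cayley_P1 a r Ha E1) as P1. pose proof (cayley_P2 a r Ha E2) as P2.
  split.
  - transitivity ((star r ⊕ r ⊕ star r ⊗ r ⊕ star r ⊗ r) ⊕ (star r ⊕ r ⊕ star r ⊗ r ⊕ star r ⊗ r)).
    + expand2. ac.
    + rewrite P1, add_0. reflexivity.
  - transitivity ((r ⊕ star r ⊕ r ⊗ star r ⊕ r ⊗ star r) ⊕ (r ⊕ star r ⊕ r ⊗ star r ⊕ r ⊗ star r)).
    + expand2. ac.
    + rewrite P2, add_0. reflexivity.
Qed.

Fixpoint wseq (x : car A) (k : nat) : car A :=
  match k with O => θ | S k => x ⊕ wseq x k ⊕ wseq x k ⊗ x end.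

Lemma wseq_unitary x k : unitary A (uw A x) -> unitary A (uw A (wseq x k)).
Proof.
  intro H. induction k; simpl. apply unitary_one.
  rewrite <- uw_mul. apply unitary_mul; auto.
Qed.
Lemma wseq_ideal (J : ideal A) x k : iset J x -> iset J (wseq x k).
Proof.
  intro H; induction k; simpl. apply i0. apply iadd. apply iadd; auto. apply imull; auto.
Qed.
Lemma wseq_comm a x k : a ⊗ x = x ⊗ a -> a ⊗ wseq x k = wseq x k ⊗ a.
Proof.
  intro H; induction k; simpl. rewrite mul_0l, mul_0r; reflexivity.
  rewrite !mul_distr_l, !mul_distr_r, H, IHk, mul_assoc, <- (mul_assoc _ (wseq x k) x a), <- H.
  rewrite !mul_assoc, IHk. reflexivity.
Qed.

Lemma telescope a x N : a ⊗ x = x ⊗ a -> a ⊕ a ⊕ x ⊕ x ⊗ a = θ ->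
  asum A N (fun k => (a ⊕ a) ⊕ (a ⊕ a) ⊗ wseq x k) = ⊖ (wseq x N ⊕ wseq x N ⊗ a).
Proof.
  intros Hc K1. induction N; cbn [asum wseq].
  - rewrite mul_0l, add_0, opp_zero. reflexivity.
  - rewrite IHN. set (w := wseq x N).
    assert (Hw : (a ⊕ a) ⊗ w = w ⊗ (a ⊕ a)).
    { unfold w. rewrite mul_distr_l, mul_distr_r, wseq_comm; auto. }
    rewrite Hw.
    assert (K : a ⊕ a = ⊖ (x ⊕ x ⊗ a)).
    { apply opp_unique. rewrite <- K1. ac. }
    rewrite K. expand2. ac.
Qed.
End K2.


Section K3.
Variable A : CStar.
Implicit Types x y z b w a r : car A.

Lemma scal_Copp (c : C) x : (Copp c) ⋅ x = ⊖ (c ⋅ x).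
Proof.
  rewrite <- scal_m1, scal_assoc. f_equal. apply injective_projections; simpl; ring.
Qed.

Lemma approx_unit (J : ideal A) j (δ : R) : iset J j -> (0 < δ)%R ->
  exists u, iset J u /\ (norm (j ⊝ j ⊗ u) <= δ)%R /\ forall b, (norm (b ⊝ b ⊗ u) <= norm b)%R.
Proof.
  intros Hj Hd.
  set (s := star j ⊗ j).
  assert (Hs : iset J s) by (apply imull; auto).
  assert (Hss : star s = s) by (unfold s; rewrite star_mul, star_invol; reflexivity).
  pose proof (norm_nonneg _ s) as Hns.
  set (eps := (/ (2 * (norm s + 1)))%R).
  assert (He : (0 < eps)%R) by (unfold eps; apply Rinv_0_lt_compat; lra).
  assert (Hes : (eps * norm s <= /2)%R).
  { unfold eps. apply Rmult_le_reg_l with (2 * (norm s + 1))%R. lra.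
    field_simplify; lra. }
  set (c0 := Cmult Ci (RtoC eps)).
  assert (Hc0 : Cmod c0 = eps).
  { unfold c0. rewrite Cmod_mult, Cmod_Ci, Cmod_R, Rabs_pos_eq; lra. }
  set (a := c0 ⋅ s).
  assert (Hna : (norm a <= /2)%R) by (unfold a; rewrite norm_scal, Hc0; lra).
  assert (Ha : star a = ⊖ a).
  { unfold a. rewrite star_scal, Hss, <- scal_Copp. f_equal. unfold c0.
    apply injective_projections; simpl; ring. }
  destruct (neumann A a Hna) as [r [E1 [E2 Hconv]]].
  assert (Haj : iset J a) by (apply iscal; auto).
  assert (Hr : iset J r).
  { apply iclosed. exists (neu A a). split; auto.
    intro n; induction n; simpl. apply i0.
    apply iadd. apply iopp; auto. apply iopp. apply imull; auto. }
  set (x := r ⊕ r).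
  assert (Hx : iset J x) by (apply iadd; auto).
  pose proof (cayley_unitary A a r Ha E1 E2) as HU. fold x in HU.
  assert (Hcomm : a ⊗ x = x ⊗ a).
  { assert (a ⊗ r = r ⊗ a). { apply (add_cancel_l _ (a ⊕ r)). rewrite E1, E2. reflexivity. }
    unfold x. rewrite mul_distr_l, mul_distr_r, H. reflexivity. }
  assert (K1 : a ⊕ a ⊕ x ⊕ x ⊗ a = θ).
  { transitivity ((a ⊕ r ⊕ r ⊗ a) ⊕ (a ⊕ r ⊕ r ⊗ a)).
    - unfold x. rewrite mul_distr_r. ac.
    - rewrite E2, add_0. reflexivity. }
  destruct (INR_unbounded (3 / (2 * eps * (δ * δ)))) as [N HN].
  assert (HN0 : (0 < INR N)%R).
  { eapply Rle_lt_trans; [|apply HN]. apply Rlt_le, Rdiv_lt_0_compat. lra.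
    apply Rmult_lt_0_compat. lra. nra. }
  set (w := wseq A x).
  assert (Hwu : forall k, unitary A (uw A (w k))) by (intro; apply wseq_unitary; auto).
  assert (Hwn : forall k, (norm (w k) <= 2)%R) by (intro; apply uw_norm; auto).
  set (m := asum A N w).
  set (u := ⊖ (RtoC (/ INR N) ⋅ m)).
  exists u.
  assert (Hid : forall b, b ⊝ b ⊗ u = RtoC (/ INR N) ⋅ asum A N (fun k => b ⊕ b ⊗ w k)).
  { intro b. rewrite asum_add, asum_const, scal_distr_l, scal_assoc, <- asum_mul_l.
    unfold u. rewrite mul_oppr, opp_opp, mul_scal_r.
    replace (Cmult (RtoC (/ INR N)) (RtoC (INR N))) with (RtoC 1). rewrite scal_1. reflexivity.
    apply injective_projections; simpl; field; lra. }
  assert (HinvN : Cmod (RtoC (/ INR N)) = (/ INR N)%R).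
  { rewrite Cmod_R, Rabs_pos_eq. reflexivity. apply Rlt_le, Rinv_0_lt_compat; auto. }
  split; [|split].
  - apply iopp, iscal. unfold m. apply asum_ideal. intro k. apply wseq_ideal; auto.
  - set (Y := asum A N (fun k => s ⊕ s ⊗ w k)).
    assert (HY : (2 * eps * norm Y <= 3)%R).
    { set (c1 := Cplus c0 c0).
      assert (E : c1 ⋅ Y = asum A N (fun k => (a ⊕ a) ⊕ (a ⊕ a) ⊗ w k)).
      { unfold Y. rewrite asum_scal. apply asum_ext. intro k.
        unfold c1, a. rewrite scal_distr_l, !scal_distr_r, mul_distr_r, !mul_scal_l. reflexivity. }
      unfold w in E. rewrite telescope in E; auto.
      assert (Hc1 : Cmod c1 = (2 * eps)%R).
      { unfold c1. replace (Cplus c0 c0) with (Cmult (RtoC 2) c0).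
        rewrite Cmod_mult, Hc0, Cmod_R, Rabs_pos_eq; lra.
        apply injective_projections; simpl; ring. }
      assert (Hn := f_equal norm E). rewrite norm_scal, Hc1, norm_opp in Hn.
      rewrite Hn. eapply Rle_trans. apply norm_triangle.
      pose proof (norm_mul _ (wseq A x N) a). pose proof (Hwn N). unfold w in H0.
      pose proof (norm_nonneg _ (wseq A x N)). pose proof (norm_nonneg _ a). nra. }
    set (cc := asum A N (fun k => j ⊕ j ⊗ w k)).
    assert (Hcc : star cc ⊗ cc = asum A N (fun l => Y ⊕ star (w l) ⊗ Y)).
    { unfold cc at 1. rewrite asum_star, asum_mul_r. apply asum_ext. intro l.
      rewrite star_add, star_mul, mul_distr_r, <- mul_assoc.
      assert (star j ⊗ cc = Y).
      { unfold cc, Y. rewrite asum_mul_l. apply asum_ext. intro k.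
        rewrite mul_distr_l, mul_assoc. reflexivity. }
      rewrite H. reflexivity. }
    assert (Hncc : (norm cc * norm cc <= INR N * norm Y)%R).
    { rewrite <- norm_cstar, Hcc. apply asum_norm. intro l. apply uw_left. auto. }
    rewrite Hid. fold cc. rewrite norm_scal, HinvN.
    pose proof (norm_nonneg _ cc). pose proof (norm_nonneg _ Y).
    assert (HN' : (3 < INR N * (2 * eps * (δ * δ)))%R).
    { assert (0 < 2 * eps * (δ * δ))%R by (apply Rmult_lt_0_compat; nra).
      apply Rmult_gt_compat_r with (r := (2 * eps * (δ * δ))%R) in HN; auto.
      replace (3 / (2 * eps * (δ * δ)) * (2 * eps * (δ * δ)))%R with 3%R in HN by (field; nra). lra. }
    assert (Hsq : ((/ INR N * norm cc) * (/ INR N * norm cc) <= δ * δ)%R).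
    { replace ((/ INR N * norm cc) * (/ INR N * norm cc))%R with
        (norm cc * norm cc / (INR N * INR N))%R by (field; lra).
      apply Rmult_le_reg_r with (INR N * INR N)%R. nra.
      unfold Rdiv. rewrite Rmult_assoc, Rinv_l, Rmult_1_r by nra.
      assert (INR N * norm Y * (2 * eps) <= INR N * 3)%R by nra.
      assert (INR N * 3 <= INR N * (INR N * (2 * eps * (δ * δ))))%R by nra.
      apply Rmult_le_reg_r with (2 * eps)%R. lra. nra. }
    assert (0 <= / INR N * norm cc)%R by (apply Rmult_le_pos; auto; apply Rlt_le, Rinv_0_lt_compat; auto).
    nra.
  - intro b. rewrite Hid, norm_scal, HinvN.
    pose proof (asum_norm A N (fun k => b ⊕ b ⊗ w k) (norm b) (fun k => uw_right A b (w k) (Hwu k))).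
    apply Rmult_le_compat_l with (r := (/ INR N)%R) in H. 2: apply Rlt_le, Rinv_0_lt_compat; auto.
    replace (/ INR N * (INR N * norm b))%R with (norm b) in H by (field; lra). exact H.
Qed.
End K3.


Lemma choice_nat {T : Type} (P : nat -> T -> Prop) :
  (forall n, exists y, P n y) -> exists f : nat -> T, forall n, P n (f n).
Proof.
  intro H. exists (fun n => proj1_sig (constructive_indefinite_description _ (H n))).
  intro n. exact (proj2_sig (constructive_indefinite_description _ (H n))).
Qed.

Section Final.
Variable A : CStar.
Implicit Types x y z b w a r : car A.

Lemma sub_add_add x y z w : (x ⊕ y) ⊝ (z ⊕ w) = (x ⊝ z) ⊕ (y ⊝ w).
Proof. rewrite opp_add. ac. Qed.

Lemma conv_lip (F : car A -> car A) (L : R) (u : nat -> car A) x :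
  conv u x -> (forall y z, norm (F y ⊝ F z) <= L * norm (y ⊝ z))%R ->
  conv (fun n => F (u n)) (F x).
Proof.
  intros Hc HL eps He.
  set (L' := (Rabs L + 1)%R).
  assert (HL' : (0 < L')%R) by (unfold L'; pose proof (Rabs_pos L); lra).
  destruct (Hc (eps / L')%R) as [N HN]. apply Rdiv_lt_0_compat; lra.
  exists N. intros n Hn. specialize (HN n Hn). specialize (HL (u n) x).
  assert (L * norm (u n ⊝ x) <= L' * norm (u n ⊝ x))%R.
  { apply Rmult_le_compat_r. apply norm_nonneg. unfold L'. pose proof (Rle_abs L). lra. }
  assert (L' * norm (u n ⊝ x) < eps)%R.
  { apply Rmult_lt_compat_l with (r := L') in HN; auto.
    replace (L' * (eps / L'))%R with eps in HN by (field; lra). lra. }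
  lra.
Qed.

Lemma conv_add (u v : nat -> car A) x y : conv u x -> conv v y -> conv (fun n => u n ⊕ v n) (x ⊕ y).
Proof.
  intros Hu Hv eps He.
  destruct (Hu (eps/2)%R) as [N1 H1]. lra. destruct (Hv (eps/2)%R) as [N2 H2]. lra.
  exists (N1 + N2)%nat. intros n Hn. rewrite sub_add_add.
  eapply Rle_lt_trans. apply norm_triangle.
  specialize (H1 n ltac:(lia)). specialize (H2 n ltac:(lia)). lra.
Qed.

Lemma conv_bound (u : nat -> car A) x (C : R) :
  (forall n, norm (u n ⊝ x) <= C * (/2)^n)%R -> conv u x.
Proof.
  intros H eps He. destruct (half_pow_small C eps He) as [N HN].
  exists N. intros n Hn. specialize (H n). specialize (HN n Hn). lra.
Qed.

Lemma dist_inter (I J : ideal A) i j (eps : R) : iset I i -> iset J j -> (0 < eps)%R ->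
  exists k, iset I k /\ iset J k /\ (norm (i ⊝ k) <= norm (i ⊝ j) + eps)%R.
Proof.
  intros Hi Hj He. destruct (approx_unit A J j eps Hj He) as [u [Hu [H1 H2]]].
  exists (i ⊗ u). split; [apply imulr; auto|split; [apply imull; auto|]].
  assert (E : i ⊝ i ⊗ u = ((i ⊝ j) ⊝ (i ⊝ j) ⊗ u) ⊕ (j ⊝ j ⊗ u)).
  { rewrite mul_distr_r, mul_oppl, !opp_add, !opp_opp. symmetry. canc j. canc (j ⊗ u). ac. }
  rewrite E. eapply Rle_trans. apply norm_triangle. specialize (H2 (i ⊝ j)). lra.
Qed.

Definition sumset (I J : ideal A) x := exists p q, iset I p /\ iset J q /\ x = p ⊕ q.

Lemma sum_closed (I J : ideal A) x : in_closure (sumset I J) x -> sumset I J x.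
Proof.
  intros [v [Hv Hc]].
  assert (Hpq : forall n, exists pq : car A * car A, iset I (fst pq) /\ iset J (snd pq) /\
              (norm (x ⊝ (fst pq ⊕ snd pq)) <= (/2)^n)%R).
  { intro n. destruct (Hc ((/2)^n)%R) as [N HN]. apply pow_lt; lra.
    destruct (Hv N) as [p [q [Hp [Hq E]]]]. exists (p, q). simpl. split; auto. split; auto.
    rewrite <- E, norm_sub_sym. apply Rlt_le, HN. lia. }
  apply choice_nat in Hpq. destruct Hpq as [g Hg].
  set (p := fun n => fst (g n)). set (q := fun n => snd (g n)).
  assert (Hk : forall n, exists k, iset I k /\ iset J k /\
             (norm ((p (S n) ⊝ p n) ⊝ k) <= 3 * (/2)^n)%R).
  { intro n. destruct (Hg n) as [Hp0 [Hq0 H0]]. destruct (Hg (S n)) as [Hp1 [Hq1 H1]].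
    destruct (dist_inter I J (p (S n) ⊝ p n) (q n ⊝ q (S n)) ((/2)^n)%R) as [k [Hk1 [Hk2 Hk3]]].
    apply iadd; auto. apply iopp; auto. apply iadd; auto. apply iopp; auto. apply pow_lt; lra.
    exists k. split; auto. split; auto. eapply Rle_trans. apply Hk3.
    assert (E : (p (S n) ⊝ p n) ⊝ (q n ⊝ q (S n)) =
                (x ⊝ (p n ⊕ q n)) ⊝ (x ⊝ (p (S n) ⊕ q (S n)))).
    { rewrite !opp_add, !opp_opp. symmetry. canc x. ac. }
    rewrite E.
    pose proof (norm_triangle _ (x ⊝ (p n ⊕ q n)) (⊖ (x ⊝ (p (S n) ⊕ q (S n))))) as T.
    rewrite norm_opp in T.
    change (norm (x ⊝ (p n ⊕ q n)) <= (/2)^n)%R in H0.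
    change (norm (x ⊝ (p (S n) ⊕ q (S n))) <= /2 * (/2)^n)%R in H1.
    assert (0 < (/2)^n)%R by (apply pow_lt; lra). lra. }
  apply choice_nat in Hk. destruct Hk as [kk Hkk].
  set (p' := fun n => p n ⊝ asum A n kk).
  assert (Hp'd : forall n, (norm (p' (S n) ⊝ p' n) <= 3 * (/2)^n)%R).
  { intro n. unfold p'. cbn [asum].
    replace (p (S n) ⊝ (asum A n kk ⊕ kk n) ⊝ (p n ⊝ asum A n kk)) with ((p (S n) ⊝ p n) ⊝ kk n).
    apply Hkk. rewrite !opp_add, !opp_opp. symmetry. canc (asum A n kk). ac. }
  destruct (geo_cauchy A p' 3 Hp'd) as [P [HP HPn]].
  assert (HPI : iset I P).
  { apply iclosed. exists p'. split; auto. intro n. unfold p'. apply iadd.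
    destruct (Hg n); auto. apply iopp. apply asum_ideal. intro k. destruct (Hkk k); tauto. }
  assert (HQJ : iset J (x ⊝ P)).
  { apply iclosed. exists (fun n => q n ⊕ asum A n kk). split.
    - intro n. apply iadd. destruct (Hg n) as [_ [? _]]; auto.
      apply asum_ideal. intro k. destruct (Hkk k) as [_ [? _]]; auto.
    - apply (conv_bound _ _ 7). intro n.
      replace (q n ⊕ asum A n kk ⊝ (x ⊝ P)) with (⊖ (x ⊝ (p n ⊕ q n)) ⊕ ⊖ (p' n ⊝ P)).
      + eapply Rle_trans. apply norm_triangle. rewrite !norm_opp.
        destruct (Hg n) as [_ [_ H]]. specialize (HPn n).
        change (norm (x ⊝ (p n ⊕ q n)) <= (/2)^n)%R in H. lra.
      + unfold p'. rewrite !opp_add, !opp_opp. canc (p n). ac. }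
  exists P, (x ⊝ P). split; auto. split; auto.
  rewrite add_comm, <- add_assoc, add_opp, add_0r. reflexivity.
Qed.
End Final.


Section Ideals.
Variable A : CStar.
Implicit Types x y z b w a r : car A.

Lemma conv_const_eq (u : nat -> car A) x y : (forall n, u n = y) -> conv u x -> x = y.
Proof.
  intros Hu Hc. symmetry. apply sub_eq0. apply norm_le_eps. intros eps He.
  destruct (Hc eps He) as [N HN]. specialize (HN N (le_n _)). rewrite Hu in HN. lra.
Qed.

Lemma conv_const x : conv (fun _ => x) x.
Proof. intros eps He. exists O. intros. rewrite add_oppr, norm_zero. lra. Qed.

Definition zero_ideal : ideal A.
Proof.
  refine (Build_ideal A (fun x => x = θ) eq_refl _ _ _ _ _ _ _).
  - intros x y -> ->. apply add_0.
  - intros x ->. apply opp_zero.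
  - intros c x ->. apply scal_zero.
  - intros c x ->. apply mul_0r.
  - intros c x ->. apply mul_0l.
  - intros x ->. apply star_zero.
  - intros x [u [Hu Hc]]. exact (conv_const_eq u x θ Hu Hc).
Defined.

Definition sum_ideal (I J : ideal A) : ideal A.
Proof.
  refine (Build_ideal A (sumset A I J) _ _ _ _ _ _ _ (sum_closed A I J)).
  - exists θ, θ. split. apply i0. split. apply i0. rewrite add_0. reflexivity.
  - intros x y [p1 [q1 [H1 [H2 ->]]]] [p2 [q2 [H3 [H4 ->]]]].
    exists (p1 ⊕ p2), (q1 ⊕ q2). split. apply iadd; auto. split. apply iadd; auto. ac.
  - intros x [p [q [H1 [H2 ->]]]]. exists (⊖ p), (⊖ q). split. apply iopp; auto.
    split. apply iopp; auto. apply opp_add.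
  - intros c x [p [q [H1 [H2 ->]]]]. exists (c ⋅ p), (c ⋅ q). split. apply iscal; auto.
    split. apply iscal; auto. apply scal_distr_l.
  - intros c x [p [q [H1 [H2 ->]]]]. exists (c ⊗ p), (c ⊗ q). split. apply imull; auto.
    split. apply imull; auto. apply mul_distr_l.
  - intros c x [p [q [H1 [H2 ->]]]]. exists (p ⊗ c), (q ⊗ c). split. apply imulr; auto.
    split. apply imulr; auto. apply mul_distr_r.
  - intros x [p [q [H1 [H2 ->]]]]. exists (star p), (star q). split. apply istar; auto.
    split. apply istar; auto. apply star_add.
Defined.

Section Union.
Variables (L : Type) (le : L -> L -> Prop) (F : L -> ideal A).
Hypothesis Hdir : directed le.
Hypothesis Hmono : forall l m, le l m -> forall x, iset (F l) x -> iset (F m) x.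

Definition U0 x := exists l, iset (F l) x.

Lemma U0_lip (G : car A -> car A) (Lc : R) :
  (forall l x, iset (F l) x -> iset (F l) (G x)) ->
  (forall y z, norm (G y ⊝ G z) <= Lc * norm (y ⊝ z))%R ->
  forall x, in_closure U0 x -> in_closure U0 (G x).
Proof.
  intros HG HL x [u [Hu Hc]]. exists (fun n => G (u n)). split.
  - intro n. destruct (Hu n) as [l Hl]. exists l. auto.
  - apply (conv_lip A G Lc); auto.
Qed.

Lemma closure_closed x : in_closure (in_closure U0) x -> in_closure U0 x.
Proof.
  intros [v [Hv Hc]].
  assert (H : forall n, exists y, U0 y /\ (norm (y ⊝ v n) <= (/2)^n)%R).
  { intro n. destruct (Hv n) as [u [Hu Hcu]].
    destruct (Hcu ((/2)^n)%R) as [N HN]. apply pow_lt; lra.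
    exists (u N). split; auto. apply Rlt_le, HN. lia. }
  apply choice_nat in H. destruct H as [y Hy].
  exists y. split. intro n; apply Hy.
  intros eps He. destruct (Hc (eps/2)%R) as [N1 H1]. lra.
  destruct (half_pow_small 1 (eps/2)%R) as [N2 H2]. lra.
  exists (N1 + N2)%nat. intros n Hn.
  eapply Rle_lt_trans. apply (norm_sub_tri _ _ (v n)).
  specialize (H1 n ltac:(lia)). specialize (H2 n ltac:(lia)). destruct (Hy n) as [_ Hyn]. lra.
Qed.

Definition union_ideal : ideal A.
Proof.
  refine (Build_ideal A (in_closure U0) _ _ _ _ _ _ _ closure_closed).
  - destruct Hdir as [[l0] _].
    exists (fun _ => θ). split. intro; exists l0; apply i0. apply conv_const.
  - destruct Hdir as [_ [_ [_ Hub]]].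
    intros x y [u [Hu Hcu]] [v [Hv Hcv]]. exists (fun n => u n ⊕ v n). split.
    + intro n. destruct (Hu n) as [l1 H1], (Hv n) as [l2 H2]. destruct (Hub l1 l2) as [m [Hm1 Hm2]].
      exists m. apply iadd; [apply (Hmono l1 m Hm1); auto | apply (Hmono l2 m Hm2); auto].
    + apply conv_add; auto.
  - apply (U0_lip (fun x => ⊖ x) 1). intros; apply iopp; auto.
    intros y z. rewrite <- opp_add, norm_opp. lra.
  - intro c. apply (U0_lip (fun x => c ⋅ x) (Cmod c)). intros; apply iscal; auto.
    intros y z. rewrite <- scal_opp, <- scal_distr_l, norm_scal. lra.
  - intro c. apply (U0_lip (fun x => c ⊗ x) (norm c)). intros; apply imull; auto.
    intros y z. rewrite <- mul_oppr, <- mul_distr_l. apply norm_mul.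
  - intro c. apply (U0_lip (fun x => x ⊗ c) (norm c)). intros; apply imulr; auto.
    intros y z. rewrite <- mul_oppl, <- mul_distr_r. rewrite Rmult_comm. apply norm_mul.
  - apply (U0_lip star 1). intros; apply istar; auto.
    intros y z. rewrite <- star_opp, <- star_add, norm_star. lra.
Defined.

Lemma union_ideal_iset x : iset union_ideal x <-> in_closure U0 x.
Proof. unfold union_ideal. simpl. tauto. Qed.
End Union.
End Ideals.

Theorem corollary1p4 (P : CStar -> Prop)
  (H0 : forall A : CStar, (forall x : car A, x = zero) -> P A)
  (Hsum : forall (A : CStar) (I J K : ideal A),
      P (ideal_cstar I) -> P (ideal_cstar J) ->
      (forall x, iset K x <-> exists y z, iset I y /\ iset J z /\ x = add y z) ->
      P (ideal_cstar K))
  (Hunion : forall (A : CStar) (L : Type) (le : L -> L -> Prop) (F : L -> ideal A),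
      directed le ->
      (forall l m, le l m -> forall x, iset (F l) x -> iset (F m) x) ->
      (forall l, P (ideal_cstar (F l))) ->
      forall K : ideal A,
      (forall x, iset K x <-> in_closure (fun y => exists l, iset (F l) y) x) ->
      P (ideal_cstar K)) :
  admits_largest_ideals P.
Proof.
  intro A.
  set (L := {J : ideal A | P (ideal_cstar J)}).
  set (le := fun (J1 J2 : L) => forall x, iset (proj1_sig J1) x -> iset (proj1_sig J2) x).
  set (F := fun J : L => proj1_sig J).
  assert (Hz : P (ideal_cstar (zero_ideal A))).
  { apply H0. intro x. apply sub_eq. destruct x as [x Hx]. simpl. exact Hx. }
  assert (Hdir : directed le).
  { split. constructor. exact (exist _ (zero_ideal A) Hz).
    split. intros l x H; exact H.
    split. intros l m n H1 H2 x H; auto.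
    intros [J1 HJ1] [J2 HJ2].
    assert (HK : P (ideal_cstar (sum_ideal A J1 J2))).
    { apply (Hsum A J1 J2); auto. intro x. simpl. unfold sumset. tauto. }
    exists (exist _ (sum_ideal A J1 J2) HK). split.
    - intros x Hx. simpl. exists x, θ. split; auto. split. apply i0. rewrite add_0r; reflexivity.
    - intros x Hx. simpl. exists θ, x. split. apply i0. split; auto. rewrite add_0; reflexivity. }
  assert (Hmono : forall l m, le l m -> forall x, iset (F l) x -> iset (F m) x).
  { intros l m H. exact H. }
  exists (union_ideal A L le F Hdir Hmono). split.
  - apply (Hunion A L le F Hdir Hmono).
    + intro l. exact (proj2_sig l).
    + intro x. apply union_ideal_iset.
  - intros J HJ x Hx. apply union_ideal_iset.
    exists (fun _ => x). split. intro n. exists (exist _ J HJ). exact Hx. apply conv_const.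
Qed.
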